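(* Let $(X,\rho)$ be a separable metric space, $\mu$ a Radon measure on $X$, and $\{X_i\}_{i=1}^\infty$ a $\mu$-measurable decomposition of $X$. Suppose that for each $i$ there is $\delta_i\in\Upsilon(X_i,\mu)$ with $\|\delta_i\|_{\mathrm{op}}\le1$. Then the linear operator $\delta:\mathrm{Lip}_b(X)\to L^\infty(X,\mu)$, $\delta f=\sum_{i=1}^\infty\chi_{X_i}\,\delta_i(f|_{X_i})$, is a derivation in $\Upsilon(X,\mu)$ with $\|\delta\|_{\mathrm{op}}\le1$.
   Context: A collection $\{X_i\}$ of $\mu$-measurable sets is a $\mu$-measurable decomposition if $\mu$ is concentrated on $\bigcup_iX_i$ and $\mu(X_i\cap X_j)=0$ for $i\ne j$. For a metric space $Y$ with Borel measure $\mu$, $\mathrm{Lip}_b(Y)$ is the space of bounded Lipschitz functions with norm $\|f\|_{\mathrm{Lip}}=\max(\sup|f|,L(f))$; a derivation is a linear map $\delta:\mathrm{Lip}_b(Y)\to L^\infty(Y,\mu)$ with the Leibniz rule $\delta(fg)=f\delta g+g\delta f$ and such that whenever a net $(f_\alpha)$ with $\sup\|f_\alpha\|_{\mathrm{Lip}}<\infty$ converges pointwise to $f$, $\delta f_\alpha\to\delta f$ weak-* in $L^\infty(Y,\mu)$; $\Upsilon(Y,\mu)$ is the set of derivations, and $\Upsilon(X_i,\mu)$ refers to the subspace $X_i$ with the restricted metric and measure. $\|\delta\|_{\mathrm{op}}=\sup\{\|\delta f\|_{L^\infty}:\|f\|_{\mathrm{Lip}}\le1\}$. *)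

(* Defs.v *)
From HB Require Import structures.
From mathcomp Require Import all_boot all_order all_algebra.
From mathcomp Require Import all_classical all_reals all_analysis.
Set Implicit Arguments. Unset Strict Implicit. Unset Printing Implicit Defensive.
Import Order.TTheory GRing.Theory Num.Theory.
Import numFieldNormedType.Exports.
Local Open Scope classical_set_scope.
Local Open Scope ring_scope.

Section MetricDefs.
Context {R : realType} {T : Type} (rho : T -> T -> R).

Definition is_metric : Prop :=
  (forall x y, 0 <= rho x y) /\ (forall x y, rho x y = 0 <-> x = y) /\
  (forall x y, rho x y = rho y x) /\
  (forall x y z, rho x z <= rho x y + rho y z).

Definition separable : Prop :=
  exists D : set T, countable D /\
    forall x (e : R), 0 < e -> exists2 y, D y & rho x y < e.

Definition mball (x : T) (r : R) : set T := [set y | rho x y < r].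

Definition mopen (U : set T) : Prop :=
  forall x, U x -> exists2 r : R, 0 < r & mball x r `<=` U.

Definition mcompact (K : set T) : Prop :=
  forall (I : Type) (U : I -> set T), (forall i, mopen (U i)) ->
    K `<=` \bigcup_i U i ->
    exists2 J : set I, finite_set J & K `<=` \bigcup_(i in J) U i.

Definition mborel : set (set T) := <<s mopen >>.

Definition sup_le (A : set T) (f : T -> R) (M : R) : Prop :=
  forall x, A x -> `|f x| <= M.
Definition lip_le (A : set T) (f : T -> R) (L : R) : Prop :=
  forall x y, A x -> A y -> `|f x - f y| <= L * rho x y.
(* ||f|_A||_Lip = max(sup |f|, L(f)) <= c *)
Definition lipnorm_le (A : set T) (f : T -> R) (c : R) : Prop :=
  sup_le A f c /\ lip_le A f c.
Definition lipb (A : set T) (f : T -> R) : Prop := exists c, lipnorm_le A f c.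

End MetricDefs.

Definition directed (I : Type) (le : I -> I -> Prop) : Prop :=
  (exists i : I, True) /\ (forall i, le i i) /\
  (forall i j k, le i j -> le j k -> le i k) /\
  (forall i j, exists k, le i k /\ le j k).

Definition net_cvg {R : realType} (I : Type) (le : I -> I -> Prop)
  (u : I -> R) (l : R) : Prop :=
  forall e : R, 0 < e -> exists i0, forall i, le i0 i -> `|u i - l| < e.

Section MeasureDefs.
Context {d : measure_display} {T : measurableType d} {R : realType}.
Variables (rho : T -> T -> R) (mu : {measure set T -> \bar R}).

Definition radon : Prop :=
  (forall x, exists2 U, mopen rho U /\ U x & (mu U < +oo)%E) /\
  (forall A, measurable A ->
     mu A = ereal_sup [set mu K | K in [set K | mcompact rho K /\ K `<=` A]]).

(* the sigma-algebra of T is the sigma-algebra of mu-measurable sets,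
   i.e. the mu-completion of the Borel sets of (T, rho) *)
Definition mu_measurable_sets : Prop :=
  forall A : set T, measurable A <->
    exists B C, [/\ mborel rho B, mborel rho C, B `<=` A, A `<=` C &
                    mu (C `\` B) = 0%E].

Definition measurable_decomposition (X : nat -> set T) : Prop :=
  (forall i, measurable (X i)) /\
  mu (~` \bigcup_i X i) = 0%E /\
  (forall i j, i <> j -> mu (X i `&` X j) = 0%E).

(* Elements of Lip_b(A) are represented by functions T -> R (only values on A
   matter); elements of L^oo(A, mu) by functions T -> R modulo mu-a.e.
   equality on A. *)
Definition ae_on (A : set T) (P : T -> Prop) : Prop :=
  {ae mu, forall x, A x -> P x}.

Definition Linfty (A : set T) (g : T -> R) : Prop :=
  measurable_fun A g /\ exists M : R, ae_on A (fun x => `|g x| <= M).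

Definition L1 (A : set T) (g : T -> R) : Prop :=
  mu.-integrable A (EFin \o g).

Definition derivation (A : set T) (delta : (T -> R) -> (T -> R)) : Prop :=
  [/\
   (* well defined on Lip_b(A): depends only on f|_A *)
   (forall f g, lipb rho A f -> lipb rho A g -> (forall x, A x -> f x = g x) ->
      ae_on A (fun x => delta f x = delta g x)),
   (forall f, lipb rho A f -> Linfty A (delta f)),
   (forall f g (a b : R), lipb rho A f -> lipb rho A g ->
      ae_on A (fun x => delta (fun y => a * f y + b * g y) x
                        = a * delta f x + b * delta g x)),
   (forall f g, lipb rho A f -> lipb rho A g ->
      ae_on A (fun x => delta (fun y => f y * g y) x
                        = f x * delta g x + g x * delta f x)) &
   (* weak-* continuity along bounded pointwise convergent nets *)
   (forall (I : Type) (le : I -> I -> Prop) (F : I -> T -> R) (f : T -> R),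
      directed le ->
      (exists C : R, forall i, lipnorm_le rho A (F i) C) ->
      (forall x, A x -> net_cvg le (fun i => F i x) (f x)) ->
      forall g, L1 A g ->
        net_cvg le
          (fun i => fine (\int[mu]_(x in A) (g x * delta (F i) x)%:E))
          (fine (\int[mu]_(x in A) (g x * delta f x)%:E)))].

Definition opnorm_le1 (A : set T) (delta : (T -> R) -> (T -> R)) : Prop :=
  forall f, lipnorm_le rho A f 1 -> ae_on A (fun x => `|delta f x| <= 1).

Definition glued_derivation (X : nat -> set T)
  (deltas : nat -> (T -> R) -> (T -> R)) : (T -> R) -> (T -> R) :=
  fun f x => limn (fun n => \sum_(0 <= i < n) (\1_(X i) x * deltas i f x)).

End MeasureDefs.

(* Main.v *)
Require Import Defs.
From HB Require Import structures.
From mathcomp Require Import all_boot all_order all_algebra.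
From mathcomp Require Import all_classical all_reals all_analysis.
Set Implicit Arguments. Unset Strict Implicit. Unset Printing Implicit Defensive.
Import Order.TTheory GRing.Theory Num.Theory.
Import numFieldNormedType.Exports.
From mathcomp Require Import ring lra.
From mathcomp Require Import measurable_realfun.
Local Open Scope classical_set_scope.
Local Open Scope ring_scope.

Section S.
Context {d : measure_display} {T : measurableType d} {R : realType}.
Variables (rho : T -> T -> R) (mu : {measure set T -> \bar R}).
Variables (X : nat -> set T) (deltas : nat -> (T -> R) -> (T -> R)).
Hypothesis Hdec : measurable_decomposition mu X.

Definition good x := (exists j, X j x) /\ (forall i j, X i x -> X j x -> i = j).

Lemma ae_good : {ae mu, forall x, good x}.
Proof.
case: Hdec => mX [Hc Hij].
have h1 : {ae mu, forall x, (\bigcup_i X i) x}.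
  exists (~` \bigcup_i X i); split => //.
    by apply: measurableC; apply: bigcupT_measurable.
have h2 : {ae mu, forall x, forall i j, i <> j -> ~ (X i x /\ X j x)}.
  apply: ae_foralln => i; apply: ae_foralln => j.
  have [->|ij] := eqVneq i j; first by apply: aeW => x; exact.
  exists (X i `&` X j); split; first exact: measurableI.
    by apply: Hij; apply/eqP.
  by move=> x /= H; apply: contrapT => K; apply: H => _.
apply: filterS2 h1 h2 => x [j _ Xj] H; split; first by exists j.
move=> i k Xi Xk; apply: contrapT => ik; exact: (H i k ik).
Qed.

Lemma glued_eq x j f : good x -> X j x ->
  glued_derivation X deltas f x = deltas j f x.
Proof.
move=> [_ gx] Xj; rewrite /glued_derivation.
apply: cvg_lim => //; apply: cvg_near_cst; near=> n.
have jn : (j < n)%N by near: n; exists j.+1.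
rewrite (bigD1_seq j) ?mem_index_iota ?iota_uniq //= big1 ?addr0.
  by rewrite indicE mem_set // mul1r.
move=> i ij; rewrite indicE; case: (boolP (x \in X i)) => [/set_mem Xi|]; last by rewrite mul0r.
by move: ij; rewrite (gx _ _ Xi Xj) eqxx.
Unshelve. all: by end_near. Qed.

Hypothesis Hm : is_metric rho.
Hypothesis Hmu : mu_measurable_sets rho mu.
Hypothesis Hd : forall i, derivation rho mu (X i) (deltas i) /\
             opnorm_le1 rho mu (X i) (deltas i).

Local Notation G := (glued_derivation X deltas).

Lemma lip_sub A f c : lipnorm_le rho setT f c -> lipnorm_le rho A f c.
Proof. by case=> h1 h2; split => [x _|x y _ _]; [apply: h1|apply: h2]. Qed.

Lemma lipb_sub A f : lipb rho setT f -> lipb rho A f.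
Proof. by case=> c h; exists c; apply: lip_sub. Qed.

Lemma glue_ae (P : T -> Prop) (Q : nat -> T -> Prop) :
  (forall j, ae_on mu (X j) (Q j)) ->
  (forall x j, good x -> X j x -> Q j x -> P x) -> ae_on mu setT P.
Proof.
move=> HQ HP.
have := @ae_foralln _ _ _ mu (fun j x => X j x -> Q j x) HQ.
move=> H; apply: filterS2 H ae_good => x H [[j Xj] gx] _.
by apply: (HP x j); [split => //; exists j|by []|apply: H].
Qed.

Lemma borel_meas B : mborel rho B -> measurable B.
Proof.
move=> hB; apply/Hmu; exists B, B; split => //.
by rewrite setDv measure0.
Qed.

Lemma complete N A : measurable N -> mu N = 0%E -> A `<=` N -> measurable A.
Proof.
move=> mN N0 AN; have [B [C [bB bC BN NC CB0]]] := (Hmu N).1 mN.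
have mB := borel_meas bB; have mC := borel_meas bC.
have C0 : mu C = 0%E.
  have CB0' : mu (C `\` B) = 0%E := CB0.
  have e : mu C = (mu (C `\` B) + mu (C `&` B))%E by apply: measureDI.
  rewrite e CB0' add0e.
  apply/eqP; rewrite -measure_le0.
  rewrite -N0; apply: le_measure; rewrite ?inE; [exact: measurableI|by []|].
  by move=> x [_ /BN].
apply/Hmu; exists set0, C; split => //.
- exact: sigma_algebra0.
- exact: subset_trans NC.
- by rewrite setD0.
Qed.

Lemma bound_lem A (delta : (T -> R) -> T -> R) f c :
  derivation rho mu A delta -> opnorm_le1 rho mu A delta ->
  lipnorm_le rho A f c -> ae_on mu A (fun x => `|delta f x| <= `|c| + 1).
Proof.
move=> [_ _ Hlin _ _] Hop [hs hl].
have c'0 : 0 < `|c| + 1 by rewrite ltr_wpDl.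
set c' := `|c| + 1 in c'0 *.
have cc' : c <= c' by rewrite (le_trans (ler_norm _))// lerDl.
have ic0 : 0 <= c'^-1 by rewrite invr_ge0 ltW.
have hg : lipnorm_le rho A (fun y => c'^-1 * f y + 0 * f y) 1.
  split.
    move=> x Ax; rewrite mul0r addr0 normrM ger0_norm //.
    rewrite -(mulVf (lt0r_neq0 c'0)); apply: ler_wpM2l => //.
    exact: le_trans (hs x Ax) cc'.
  move=> x y Ax Ay; rewrite !mul0r !addr0 -mulrBr normrM ger0_norm //.
  have r0 : 0 <= rho x y by case: Hm => h _; apply: h.
  rewrite -[X in _ <= X * _](mulVf (lt0r_neq0 c'0)) -mulrA.
  apply: ler_wpM2l => //; apply: (le_trans (hl x y Ax Ay)).
  exact: ler_wpM2r.
have lf : lipb rho A f by exists c.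
have := Hop _ hg; have := Hlin f f c'^-1 0 lf lf.
rewrite /ae_on; apply: filterS2 => x h1 h2 Ax; move: (h2 Ax); rewrite (h1 Ax) mul0r addr0.
rewrite normrM ger0_norm // => h.
have ic1 : 0 < c'^-1 by rewrite invr_gt0.
by rewrite -(ler_pM2l ic1) mulVf ?lt0r_neq0.
Qed.

Lemma meas_glued f : (forall j, measurable_fun (X j) (deltas j f)) ->
  measurable_fun setT (G f).
Proof.
move=> Hj _ B mB.
have [Nb [mNb Nb0 Nbs]] := ae_good.
have mX := Hdec.1.
have -> : setT `&` G f @^-1` B =
   (Nb `&` G f @^-1` B) `|` \bigcup_j ((X j `&` deltas j f @^-1` B) `&` ~` Nb).
  apply/seteqP; split => x.
    move=> [_ /= hB]; have [xN|xN] := pselect (Nb x); first by left.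
    have gx : good x by apply: contrapT => h; apply: xN; apply: Nbs.
    case: (gx) => [[j Xj] _]; right; exists j => //; split => //; split => //.
    by rewrite /= -(glued_eq f gx Xj).
  move=> [[_ hB]|[j _ [[Xj hB] xN]]]; split => //.
  have gx : good x by apply: contrapT => h; apply: xN; apply: Nbs.
  by rewrite /= (glued_eq f gx Xj).
apply: measurableU; first by apply: (complete mNb Nb0) => x [].
apply: bigcupT_measurable => j; apply: measurableI; last exact: measurableC.
exact: Hj.
Qed.

Lemma G_meas f : lipb rho setT f -> measurable_fun setT (G f).
Proof.
move=> lf; apply: meas_glued => j.
by case: (Hd j) => [[_ Hli _ _ _] _]; case: (Hli f (lipb_sub _ lf)).
Qed.

Lemma G_bound f c : lipnorm_le rho setT f c ->
  ae_on mu setT (fun x => `|G f x| <= `|c| + 1).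
Proof.
move=> lf; apply: (glue_ae (Q := fun j x => `|deltas j f x| <= `|c| + 1)).
  move=> j; case: (Hd j) => [Dj Oj]; apply: bound_lem Dj Oj _.
  exact: lip_sub.
by move=> x j gx Xj; rewrite (glued_eq f gx Xj).
Qed.

Lemma part_wd f g : lipb rho setT f -> lipb rho setT g ->
  (forall x, setT x -> f x = g x) -> ae_on mu setT (fun x => G f x = G g x).
Proof.
move=> _ _ fg; have -> : f = g by apply: funext => x; exact: fg.
exact: aeW.
Qed.

Lemma part_linfty f : lipb rho setT f -> Linfty mu setT (G f).
Proof.
move=> lf; split; first exact: G_meas.
case: lf => c lc; exists (`|c| + 1); exact: G_bound lc.
Qed.

Lemma part_lin f g (a b : R) : lipb rho setT f -> lipb rho setT g ->
  ae_on mu setT (fun x => G (fun y => a * f y + b * g y) x = a * G f x + b * G g x).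
Proof.
move=> lf lg; apply: (glue_ae (Q := fun j x => deltas j (fun y => a * f y + b * g y) x
  = a * deltas j f x + b * deltas j g x)).
  move=> j; case: (Hd j) => [[_ _ Hlin _ _] _].
  by apply: Hlin; apply: lipb_sub.
by move=> x j gx Xj; rewrite !(glued_eq _ gx Xj).
Qed.

Lemma part_leib f g : lipb rho setT f -> lipb rho setT g ->
  ae_on mu setT (fun x => G (fun y => f y * g y) x = f x * G g x + g x * G f x).
Proof.
move=> lf lg; apply: (glue_ae (Q := fun j x => deltas j (fun y => f y * g y) x
  = f x * deltas j g x + g x * deltas j f x)).
  move=> j; case: (Hd j) => [[_ _ _ Hl _] _].
  by apply: Hl; apply: lipb_sub.
by move=> x j gx Xj; rewrite !(glued_eq _ gx Xj).
Qed.

Lemma part_op : opnorm_le1 rho mu setT G.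
Proof.
move=> f lf; apply: (glue_ae (Q := fun j x => `|deltas j f x| <= 1)).
  move=> j; case: (Hd j) => [_ Oj]; apply: Oj; exact: lip_sub.
by move=> x j gx Xj; rewrite (glued_eq _ gx Xj).
Qed.

Definition Ev (I : Type) (le : I -> I -> Prop) (P : I -> Prop) :=
  exists i0, forall i, le i0 i -> P i.

Lemma EvI I (le : I -> I -> Prop) P Q : directed le -> Ev le P -> Ev le Q ->
  Ev le (fun i => P i /\ Q i).
Proof.
move=> [_ [_ [tr up]]] [i1 H1] [i2 H2]; have [k [k1 k2]] := up i1 i2.
exists k => i ki; split; [apply: H1|apply: H2]; exact: tr ki.
Qed.

Lemma Ev_big I (le : I -> I -> Prop) (P : nat -> I -> Prop) n : directed le ->
  (forall j, (j < n)%N -> Ev le (P j)) ->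
  Ev le (fun i => forall j, (j < n)%N -> P j i).
Proof.
move=> dir; elim: n => [|n IH] H.
  by case: dir => [[i0 _] _]; exists i0 => i _ j.
have := EvI dir (IH (fun j jn => H j (ltnW jn))) (H n (ltnSn n)).
case=> i0 Hi; exists i0 => i /Hi [h1 h2] j; rewrite ltnS leq_eqVlt.
by case/orP => [/eqP ->|]; [exact h2|exact: h1].
Qed.

Lemma lim_lipnorm (J : Type) (le : J -> J -> Prop) (F : J -> T -> R) f C :
  directed le -> (forall i, lipnorm_le rho setT (F i) C) ->
  (forall x, setT x -> net_cvg le (fun i => F i x) (f x)) ->
  lipnorm_le rho setT f C.
Proof.
move=> dir hF hc; split.
  move=> x _; apply/ler_addgt0Pr => e e0.
  have [i0 Hi] := hc x I e e0; have := Hi i0 (dir.2.1 i0).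
  have := (hF i0).1 x I => h1 h2.
  have -> : f x = F i0 x - (F i0 x - f x) by ring.
  by apply: (le_trans (ler_normB _ _)); apply: lerD => //; exact: ltW.
move=> x y _ _; apply/ler_addgt0Pr => e e0.
have e20 : 0 < e / 2 by rewrite divr_gt0.
have [ix Hx] := hc x I _ e20; have [iy Hy] := hc y I _ e20.
have [k [kx ky]] := dir.2.2.2 ix iy.
have hx := Hx k kx; have hy := Hy k ky.
have hl := (hF k).2 x y I I.
have -> : f x - f y = (F k x - F k y) + ((F k y - f y) - (F k x - f x)) by ring.
apply: (le_trans (ler_normD _ _)); apply: lerD => //.
apply: (le_trans (ler_normB _ _)).
have -> : e = e / 2 + e / 2 by field.
by apply: lerD; apply: ltW.
Qed.

Lemma Rint_aeD D f1 f2 : measurable D -> measurable_fun D f1 ->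
  measurable_fun D f2 -> ae_on mu D (fun x => f1 x = f2 x) ->
  Rintegral mu D f1 = Rintegral mu D f2.
Proof.
move=> mD m1 m2 H; congr fine; apply: ae_eq_integral => //.
- exact/measurable_realfun.measurable_EFinP.
- exact/measurable_realfun.measurable_EFinP.
- by move: H; rewrite /ae_on; apply: filterS => x h Dx; rewrite /= h.
Qed.

Lemma intM_ae D (g h : T -> R) (M : R) : measurable D -> measurable_fun D h ->
  ae_on mu D (fun x => `|h x| <= M) -> mu.-integrable D (EFin \o g) ->
  mu.-integrable D (EFin \o (fun x => g x * h x)).
Proof.
move=> mD mh hM ig.
have mg : measurable_fun D g by apply/measurable_realfun.measurable_EFinP; exact: measurable_int ig.
have i2 := integrableZl mD `|M| (integrable_abse ig).
case/integrableP: i2 => _ H2; apply/integrableP; split.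
  by apply/measurable_realfun.measurable_EFinP; apply: measurable_realfun.measurable_funM.
apply: le_lt_trans H2; apply: ae_ge0_le_integral => //.
- apply: measurableT_comp => //; apply/measurable_realfun.measurable_EFinP.
  exact: measurable_realfun.measurable_funM.
- apply: measurableT_comp => //; apply: emeasurable_funM => //.
  apply: measurableT_comp => //; exact/measurable_realfun.measurable_EFinP.
move: hM; rewrite /ae_on; apply: filterS => x hx Dx; move: (hx Dx) => {}hx.
rewrite /= lee_fin normrM [X in _ <= X]ger0_norm ?mulr_ge0 // mulrC.
apply: ler_wpM2r => //; exact: le_trans hx (ler_norm _).
Qed.

Definition V n := \bigcup_(j in [set j | (j < n)%N]) X j.

Lemma mV n : measurable (V n).
Proof. by apply: bigcup_measurable => j _; exact: Hdec.1. Qed.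

Lemma int_patch A (phi : T -> R) : measurable A ->
  mu.-integrable setT (EFin \o phi) -> mu.-integrable setT (EFin \o (phi \_ A)).
Proof.
move=> mA ig.
have := (integrable_mkcond _ mA).1 (integrableS measurableT mA (@subsetT _ A) ig).
by apply: eq_integrable => // x _; rewrite restrict_EFin.
Qed.

Lemma meas_patch A (phi : T -> R) : measurable A ->
  measurable_fun setT phi -> measurable_fun setT (phi \_ A).
Proof.
move=> mA mp; apply/(measurable_restrictT _ mA).
exact: measurable_funS mp.
Qed.

Lemma decomp (phi : T -> R) n : mu.-integrable setT (EFin \o phi) ->
  Rintegral mu setT phi =
  \sum_(j < n) Rintegral mu (X j) phi + Rintegral mu (~` V n) phi.
Proof.
move=> ig; have mp : measurable_fun setT phi.
  by apply/measurable_EFinP; exact: measurable_int ig.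
elim: n => [|n IH].
  rewrite big_ord0 add0r; have -> : ~` V 0 = setT.
    by apply/seteqP; split => x // _ [j]; rewrite /= ltn0.
  by [].
rewrite big_ord_recr IH -addrA; apply: congr1.
rewrite (Rintegral_mkcond mu (~` V n)) (Rintegral_mkcond mu (X _)).
rewrite (Rintegral_mkcond mu (~` V n.+1)) -RintegralD //; last first.
- exact: int_patch (measurableC (mV _)) ig.
- exact: int_patch (Hdec.1 n) ig.
apply: Rint_aeD => //.
- exact: meas_patch (measurableC (mV _)) mp.
- apply: measurable_funD; [exact: meas_patch (Hdec.1 n) mp|].
  exact: meas_patch (measurableC (mV _)) mp.
apply: filterS ae_good => x [_ gx] _; rewrite !patchE.
change (X (nat_of_ord (@ord_max n))) with (X n).
change (point : R) with (0 : R).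
have [Xn|nXn] := pselect (X n x).
  have nV : ~ V n x by case=> j /= jn Xj; move: jn; rewrite (gx _ _ Xj Xn) ltnn.
  have V1 : V n.+1 x by exists n => //=.
  rewrite (mem_set Xn) (mem_set (nV : (~` V n) x)).
  by rewrite memNset ?addr0 //= => /(_ V1).
rewrite (memNset nXn) add0r.
have [Vx|nVx] := pselect (V n x).
  rewrite !memNset //= => h; apply: h; case: Vx => j jn Xj; exists j => //=.
  exact: ltnW.
have nV1 : ~ V n.+1 x.
  case=> j /=; rewrite ltnS leq_eqVlt => /orP [/eqP -> //|jn Xj].
  by apply: nVx; exists j.
by rewrite (mem_set (nV1 : (~` V n.+1) x)) (mem_set (nVx : (~` V n) x)).
Qed.

Lemma tail_small (g : T -> R) e : mu.-integrable setT (EFin \o g) -> 0 < e ->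
  exists n, Rintegral mu (~` V n) (fun x => `|g x|) < e.
Proof.
move=> ig e0; have mg : measurable_fun setT g.
  by apply/measurable_EFinP; exact: measurable_int ig.
pose fn n := EFin \o ((fun x => `|g x|) \_ (~` V n)).
have mfn n : measurable_fun setT (fn n).
  apply/measurable_EFinP; apply: meas_patch; first exact: measurableC (mV _).
  exact: measurableT_comp.
have ig' : mu.-integrable setT (EFin \o (fun x => `|g x|)) by exact: integrable_norm.
have fcvg : {ae mu, forall x, setT x -> fn ^~ x @ \oo --> (cst 0%E : T -> \bar R) x}.
  apply: filterS ae_good => x [[j Xj] _] _; apply: cvg_near_cst; near=> n.
  have jn : (j < n)%N by near: n; exists j.+1.
  rewrite /fn /= patchE memNset //= => h; apply: h; by exists j.
have fdom : {ae mu, forall y n, setT y -> (`|fn n y| <= (EFin \o (fun z => `|g z|%R)) y)%E}.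
  apply: aeW => y m _; rewrite /fn /= patchE; case: ifP => _.
    by rewrite lee_fin normr_id.
  by rewrite lee_fin normr0.
have [_ _ H] := dominated_convergence measurableT mfn (measurable_cst _) fcvg ig' fdom.
move: H; rewrite integral0 => /fine_cvgP [_] /cvgrPdist_lt /(_ e e0) [N _ HN].
exists N; have := HN N (leqnn N); rewrite sub0r normrN.
rewrite (Rintegral_mkcond mu (~` V N)) /Rintegral /=.
move=> h; apply: le_lt_trans h; exact: ler_norm.
Unshelve. all: by end_near. Qed.

Lemma dmeas j h : lipb rho setT h -> measurable_fun (X j) (deltas j h).
Proof.
by move=> lh; case: (Hd j) => [[_ Hli _ _ _] _]; case: (Hli h (lipb_sub _ lh)).
Qed.

Lemma Rint_le_ae D (f1 f2 : T -> R) : measurable D ->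
  mu.-integrable D (EFin \o f1) -> mu.-integrable D (EFin \o f2) ->
  (forall x, D x -> 0 <= f1 x) -> (forall x, D x -> 0 <= f2 x) ->
  ae_on mu D (fun x => f1 x <= f2 x) ->
  Rintegral mu D f1 <= Rintegral mu D f2.
Proof.
move=> mD i1 i2 p1 p2 H; apply: fine_le; [exact: integrable_fin_num|
  exact: integrable_fin_num|].
apply: ae_ge0_le_integral => //.
- exact: measurable_int i1.
- exact: measurable_int i2.
Qed.

Lemma int_scale D (g : T -> R) (k : R) : measurable D ->
  mu.-integrable D (EFin \o g) -> mu.-integrable D (EFin \o (fun x => k * g x)).
Proof.
move=> mD ig; have := integrableZl mD k ig.
by apply: eq_integrable => // x _; rewrite /= EFinM.
Qed.

Lemma part_cont (J : Type) (le : J -> J -> Prop) (F : J -> T -> R) (f : T -> R) :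
  directed le -> (exists C, forall i, lipnorm_le rho setT (F i) C) ->
  (forall x, setT x -> net_cvg le (fun i => F i x) (f x)) ->
  forall g, L1 mu setT g ->
  net_cvg le (fun i => fine (\int[mu]_(x in setT) (g x * G (F i) x)%:E))
             (fine (\int[mu]_(x in setT) (g x * G f x)%:E)).
Proof.
move=> dir [C hF] hc g ig.
have hf := lim_lipnorm dir hF hc.
have B0 : 0 < `|C| + 1 by rewrite ltr_wpDl.
set B := `|C| + 1 in B0 *.
have mg : measurable_fun setT g.
  by apply/measurable_EFinP; exact: measurable_int ig.
have lipbC h : lipnorm_le rho setT h C -> lipb rho setT h.
  by move=> hh; exists C.
have iphi h : lipnorm_le rho setT h C ->
    mu.-integrable setT (EFin \o (fun x => g x * G h x)).
  by move=> hh; apply: (intM_ae measurableT (G_meas (lipbC h hh)) (G_bound hh) ig).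
pose Jj j h := Rintegral mu (X j) (fun x => g x * deltas j h x).
have eqJ j h : lipnorm_le rho setT h C ->
    Rintegral mu (X j) (fun x => g x * G h x) = Jj j h.
  move=> hh; have mX := Hdec.1 j.
  have mgX : measurable_fun (X j) g by exact: measurable_funS mg.
  apply: Rint_aeD => //.
  - apply: measurable_funM => //; apply: measurable_funS (G_meas (lipbC h hh)) => //.
  - by apply: measurable_funM => //; apply: dmeas; exact: lipbC.
  apply: filterS ae_good => x gx Xj; by rewrite (glued_eq h gx Xj).
have tailb h n : lipnorm_le rho setT h C ->
    `|Rintegral mu (~` V n) (fun x => g x * G h x)| <=
    B * Rintegral mu (~` V n) (fun x => `|g x|).
  move=> hh; have mA : measurable (~` V n) := measurableC (mV n).
  have iA := integrableS measurableT mA (@subsetT _ _) (iphi h hh).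
  have igA := integrableS measurableT mA (@subsetT _ _) ig.
  apply: le_trans (le_normr_Rintegral mA iA) _.
  rewrite -RintegralZl //; last exact: integrable_norm.
  apply: Rint_le_ae => //.
  - exact: integrable_norm.
  - by apply: int_scale => //; exact: integrable_norm.
  - by move=> x _; apply: mulr_ge0; [exact: ltW|].
  have := G_bound hh; rewrite /ae_on; apply: filterS => x h1 _.
  rewrite normrM mulrC; apply: ler_wpM2r => //; exact: h1.
move=> e e0.
have e30 : 0 < e / 3 by rewrite divr_gt0.
have [n Hn] := tail_small ig (divr_gt0 e30 B0).
have c0 : 0 < e / 3 / (n.+1)%:R by rewrite divr_gt0.
set c := e / 3 / (n.+1)%:R in c0 *.
have := @Ev_big J le (fun j i => `|Jj j (F i) - Jj j f| < c) n dir.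
case.
  move=> j _; case: (Hd j) => [[_ _ _ _ Hcont] _].
  apply: (Hcont J le F f dir _ _ g _ c c0).
  - by exists C => i; apply: lip_sub.
  - by move=> x _; apply: hc.
  - exact: integrableS measurableT (Hdec.1 j) (@subsetT _ _) ig.
move=> i0 Hi0; exists i0 => i li.
change (`|Rintegral mu setT (fun x => g x * G (F i) x) -
         Rintegral mu setT (fun x => g x * G f x)| < e).
rewrite (decomp n (iphi _ (hF i))) (decomp n (iphi _ hf)).
rewrite (eq_bigr (fun j : 'I_n => Jj j (F i))); last by move=> j _; apply: eqJ.
rewrite [X in _ - (X + _)](eq_bigr (fun j : 'I_n => Jj j f)); last by move=> j _; apply: eqJ.
set b1 := Rintegral mu (~` V n) _; set b2 := Rintegral mu (~` V n) _.
have -> : \sum_(j < n) Jj j (F i) + b1 - (\sum_(j < n) Jj j f + b2) =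
   \sum_(j < n) (Jj j (F i) - Jj j f) + (b1 - b2) by rewrite sumrB; ring.
have s1 : `|\sum_(j < n) (Jj j (F i) - Jj j f)| <= e / 3.
  apply: le_trans (ler_norm_sum _ _ _) _.
  apply: le_trans (ler_sum _ (fun (j : 'I_n) _ => ltW (Hi0 i li j (ltn_ord j)))) _.
  rewrite sumr_const card_ord -[c *+ n]mulr_natl /c mulrA ler_pdivrMr ?ltr0Sn //.
  by rewrite mulrC ler_pM2l // ler_nat.
have tb h : lipnorm_le rho setT h C ->
    `|Rintegral mu (~` V n) (fun x => g x * G h x)| < e / 3.
  move=> hh; apply: le_lt_trans (tailb h n hh) _.
  have -> : e / 3 = B * (e / 3 / B) by field; exact: lt0r_neq0.
  by rewrite ltr_pM2l.
have s2 := tb _ (hF i); have s3 := tb _ hf.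
rewrite -/b1 in s2; rewrite -/b2 in s3.
have s4 := ler_normB b1 b2.
apply: le_lt_trans (ler_normD _ _) _.
lra.
Qed.
End S.

Unset Implicit Arguments.

Theorem lemma2p16 (d : measure_display) (T : measurableType d) (R : realType)
  (rho : T -> T -> R) (mu : {measure set T -> \bar R})
  (X : nat -> set T) (deltas : nat -> (T -> R) -> (T -> R)) :
  is_metric rho -> separable rho ->
  mu_measurable_sets rho mu -> radon rho mu ->
  measurable_decomposition mu X ->
  (forall i, derivation rho mu (X i) (deltas i) /\
             opnorm_le1 rho mu (X i) (deltas i)) ->
  derivation rho mu setT (glued_derivation X deltas) /\
  opnorm_le1 rho mu setT (glued_derivation X deltas).
Proof.
move=> Hm _ Hmu _ Hdec Hd; split; last exact: part_op Hdec Hd.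
split.
- move=> f g lf lg fg; exact: (part_wd mu X deltas lf lg fg).
- by move=> f lf; apply: (part_linfty Hdec Hm Hmu Hd).
- by move=> f g a b lf lg; apply: (part_lin Hdec Hd).
- by move=> f g lf lg; apply: (part_leib Hdec Hd).
- move=> J le F f dir hF hc g ig.
  exact: (part_cont Hdec Hm Hmu Hd dir hF hc ig).
Qed.
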